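(* Assume $\beta_\Omega>1$ and fix $\lambda>0$ and $\tau$ with $\frac{1}{\beta_\Omega}<\tau<1$. Then there exists $\varepsilon_0>0$ such that for each $\varepsilon\in(0,\varepsilon_0]$ there is $\delta_1>0$ with the property that for every $0<\delta\le\delta_1$ the function $\psi(x)=\delta(\phi_\Omega(x)+\varepsilon)^\tau$, $x\in\overline{\Omega}$, is a supersolution of (P), i.e. $-\Delta\psi\ge\psi-\psi^p$ in $\Omega$ and $\frac{\partial\psi}{\partial\nu}\ge-\lambda\psi^q$ on $\partial\Omega$.
   Context: $\Omega\subset\mathbb{R}^N$ is a bounded domain with smooth boundary $\partial\Omega$, $\nu$ the unit outer normal, $0<q<1<p$. Problem (P): $-\Delta u=u-u^p$ in $\Omega$, $u\ge0$, $\frac{\partial u}{\partial\nu}=-\lambda u^q$ on $\partial\Omega$. $\beta_\Omega$ is the smallest Dirichlet eigenvalue of $-\Delta$ in $\Omega$ and $\phi_\Omega\in C^{2+\theta}(\overline{\Omega})$ a fixed associated eigenfunction with $\phi_\Omega>0$ in $\Omega$, $\phi_\Omega=0$ on $\partial\Omega$ (so $-\partial\phi_\Omega/\partial\nu$ is bounded between positive constants on $\partial\Omega$). *)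

(* Defs.v *)
From HB Require Import structures.
From mathcomp Require Import all_boot all_order all_algebra.
From mathcomp Require Import all_classical all_reals all_analysis.
Import Order.TTheory GRing.Theory Num.Theory.
Import numFieldNormedType.Exports.
Set Implicit Arguments. Unset Strict Implicit. Unset Printing Implicit Defensive.
Local Open Scope classical_set_scope.
Local Open Scope ring_scope.

Section PDEDefs.
Context {R : realType} {N : nat}.
Local Notation V := 'rV[R]_N.

Definition ebasis (i : 'I_N) : V := delta_mx 0 i.
Definition pd (i : 'I_N) (f : V -> R) : V -> R := fun x => 'D_(ebasis i) f x.
Definition laplacian (f : V -> R) (x : V) : R := \sum_(i < N) pd i (pd i f) x.
Definition grad (f : V -> R) (x : V) : V := \row_(i < N) pd i f x.
Definition edot (u v : V) : R := \sum_(i < N) u ord0 i * v ord0 i.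
Definition enorm (v : V) : R := Num.sqrt (edot v v).

Fixpoint iterD (vs : seq V) (f : V -> R) : V -> R :=
  match vs with
  | [::] => f
  | v :: vs' => fun x => 'D_v (iterD vs' f) x
  end.
Definition smooth_fun (f : V -> R) : Prop :=
  forall (vs : seq V) (x : V), differentiable (iterD vs f) x.

Definition C2_fun (f : V -> R) : Prop :=
  (forall x, differentiable f x) /\
  (forall j x, differentiable (pd j f) x) /\
  (forall i j, continuous (pd i (pd j f))).

Definition closure_of (O : set V) : set V := closure O.
Definition bdry (O : set V) : set V := closure O `\` O.

Definition smooth_bounded_domain (O : set V) (rho : V -> R) : Prop :=
  [/\ open O, connected O, O !=set0 & bounded_set O] /\
  [/\ smooth_fun rho, O = [set x | rho x < 0] &
      forall x, bdry O x -> rho x = 0 /\ grad rho x != 0].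

Definition outer_normal (rho : V -> R) (x : V) : V :=
  (enorm (grad rho x))^-1 *: grad rho x.
Definition dnormal (rho : V -> R) (u : V -> R) (x : V) : R :=
  edot (grad u x) (outer_normal rho x).

(* classical Dirichlet eigenfunction of -Delta with eigenvalue b
   (C^2 up to the boundary, represented as the restriction of a C^2 function on R^N) *)
Definition dirichlet_eigenfunction (O : set V) (b : R) (u : V -> R) : Prop :=
  [/\ C2_fun u, exists2 x, O x & u x != 0,
      forall x, O x -> - laplacian u x = b * u x &
      forall x, bdry O x -> u x = 0].
Definition dirichlet_eigenvalue (O : set V) (b : R) : Prop :=
  exists u, dirichlet_eigenfunction O b u.
Definition smallest_dirichlet_eigenvalue (O : set V) (b : R) : Prop :=
  dirichlet_eigenvalue O b /\ forall m, dirichlet_eigenvalue O m -> b <= m.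

Definition supersolution (O : set V) (rho : V -> R) (p q lam : R) (psi : V -> R) : Prop :=
  (forall x, O x -> - laplacian psi x >= psi x - psi x `^ p) /\
  (forall x, bdry O x -> dnormal rho psi x >= - lam * psi x `^ q).

End PDEDefs.

(* Main.v *)
Require Import Defs.
From HB Require Import structures.
From mathcomp Require Import all_boot all_order all_algebra.
From mathcomp Require Import all_classical all_reals all_analysis.
From mathcomp Require Import ring lra.
Import Order.TTheory GRing.Theory Num.Theory.
Import numFieldNormedType.Exports.
Local Open Scope classical_set_scope.
Local Open Scope ring_scope.

Section S.
Context {R : realType} {N : nat}.
Local Notation V := 'rV[R]_N.


Lemma Dpow (f : V -> R) (a : R) (x v : V) :
  differentiable f x -> 0 < f x ->
  differentiable (fun y => f y `^ a) x /\
  'D_v (fun y => f y `^ a) x = a * f x `^ (a - 1) * 'D_v f x.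
Proof.
move=> df fx0.
have dp : differentiable (fun t : R => t `^ a) (f x).
  apply/derivable1_diffP; apply: (@derivable_powR R 1 a (f x)).
  by rewrite in_itv /= fx0.
have dc : differentiable ((fun t : R => t `^ a) \o f) x by exact: differentiable_comp.
split; first exact: dc.
rewrite (_ : (fun y => f y `^ a) = (fun t : R => t `^ a) \o f) //.
rewrite deriveE // diff_comp // /= deriveE //.
rewrite (diff1E dp) powR_derive1 ?in_itv /= ?fx0 //.
by rewrite [X in X = _]mulrC.
Qed.

Lemma DMl (f : V -> R) (r : R) (x v : V) :
  derivable f x v -> 'D_v (fun y => r * f y) x = r * 'D_v f x.
Proof. move=> df; exact: deriveMl. Qed.

Lemma near_pos (f : V -> R) x : differentiable f x -> 0 < f x ->
  \forall y \near x, 0 < f y.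
Proof.
move=> /differentiable_continuous cf fx0.
exact: (cvgr_gt _ cf _ fx0).
Qed.
Lemma derivableMl (f : V -> R) (r : R) (x v : V) :
  derivable f x v -> derivable (fun y => r * f y) x v.
Proof. move=> df; exact: (derivableM (derivable_cst r x v) df). Qed.

Lemma DM (f g : V -> R) (x v : V) :
  derivable f x v -> derivable g x v ->
  'D_v (fun y => f y * g y) x = f x * 'D_v g x + g x * 'D_v f x.
Proof. move=> df dg; exact: deriveM. Qed.

Lemma derivableM' (f g : V -> R) (x v : V) :
  derivable f x v -> derivable g x v -> derivable (fun y => f y * g y) x v.
Proof. move=> df dg; exact: derivableM. Qed.

Lemma D2pow (F : V -> R) (d t : R) (x : V) (i : 'I_N) :
  (forall y, differentiable F y) -> differentiable (pd i F) x -> 0 < F x ->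
  pd i (pd i (fun y => d * F y `^ t)) x =
  d * t * ((t - 1) * F x `^ (t - 2) * pd i F x * pd i F x
           + F x `^ (t - 1) * pd i (pd i F) x).
Proof.
move=> dF dpF Fx0.
have Hn : \forall y \near x, pd i (fun y => d * F y `^ t) y =
    d * (t * F y `^ (t - 1) * pd i F y).
  near=> y.
  have Fy0 : 0 < F y by near: y; exact: near_pos.
  have [dp Dp] := Dpow F t y (ebasis i) (dF y) Fy0.
  rewrite /pd DMl; last exact: diff_derivable.
  by rewrite Dp.
rewrite /pd (near_eq_derive _ Hn) -/(pd i _).
have [dp1 Dp1] := Dpow F (t - 1) x (ebasis i) (dF x) Fx0.
have der1 : derivable (fun y => t * F y `^ (t - 1)) x (ebasis i).
  by apply: derivableMl; exact: diff_derivable.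
have der2 : derivable (pd i F) x (ebasis i) by exact: diff_derivable.
rewrite DMl; last first.
  exact: (@derivableM' (fun y => t * F y `^ (t - 1)) (pd i F) _ _ der1 der2).
rewrite -/(pd i (fun y => t * F y `^ (t - 1) * pd i F y) x).
rewrite /pd DM // DMl; last exact: diff_derivable.
rewrite Dp1 -/(pd i F x) -/(pd i (pd i F) x).
have -> : t - 1 - 1 = t - 2 by rewrite -addrA; congr (_ + _); rewrite -opprD.
rewrite /pd; ring.
Unshelve. all: by end_near.
Qed.


Lemma bounded_closure (O : set V) : bounded_set O -> bounded_set (closure O).
Proof.
move=> bO; rewrite /= /bounded_near in bO *; move: bO; apply: filterS => M HM x Cx.
have cl : closed ((fun y : V => `|y|) @^-1` [set r : R | r <= M]).
  apply: closed_comp; last exact: closed_le.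
  by move=> y _; exact: norm_continuous.
have sub : O `<=` [set y : V | `|y| <= M] by move=> y Oy; exact: HM.
by move: (closureS sub Cx); rewrite -(proj1 (closure_id _) cl).
Qed.

Lemma small_phi_grad (O : set V) (phi G : V -> R) (c : R) :
  bounded_set O -> continuous phi -> continuous G -> 0 < c ->
  (forall x, O x -> 0 < phi x) -> (forall x, bdry O x -> c <= G x) ->
  exists2 eta, 0 < eta & forall x, O x -> phi x < eta -> c / 2 < G x.
Proof.
move=> bO cphi cG c0 phipos Gb.
pose K := closure O `&` [set y | G y <= c / 2].
have cK : compact K.
  apply: compact_closedI.
    apply: bounded_closed_compact; last exact: closed_closure.
    exact: bounded_closure.
  have -> : [set y | G y <= c / 2] = G @^-1` [set r : R | r <= c / 2] by [].
  by apply: closed_comp; [move=> y _; exact: cG|exact: closed_le].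
have [K0|/eqP/set0P [y0 Ky0]] := pselect (K = set0).
  exists 1 => // x Ox _; rewrite ltNge; apply/negP => Gx.
  have : K x by split => //; exact: subset_closure.
  by rewrite K0.
have [z zK zmin] := EVT_min_rV (f := phi) (ex_intro _ y0 Ky0) cK
  (continuous_subspaceT (fun x => cphi x)).
move: zK; rewrite inE => -[Cz Gz].
have Oz : O z.
  apply: contrapT => nOz.
  have := Gb z (conj Cz nOz); rewrite /= in Gz.
  move=> cG'; have : c <= c / 2 by exact: le_trans cG' Gz.
  move=> H; lra.
exists (phi z); first exact: phipos.
move=> x Ox phix; rewrite ltNge; apply/negP => Gx.
have : phi z <= phi x by apply: zmin; rewrite inE; split => //; exact: subset_closure.
by rewrite leNgt phix.
Qed.


Lemma unit_cs (a n : 'I_N -> R) :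
  \sum_i n i * n i = 1 -> (\sum_i a i * n i) ^+ 2 <= \sum_i a i ^+ 2.
Proof.
move=> nn; set d := \sum_i a i * n i.
have e : \sum_i (a i - d * n i) ^+ 2 = \sum_i a i ^+ 2 - d ^+ 2.
  have E i : (a i - d * n i) ^+ 2 =
     a i ^+ 2 - (2 * d) * (a i * n i) + d ^+ 2 * (n i * n i) by ring.
  under eq_bigr => i _ do rewrite E.
  rewrite !big_split /= sumrN -!mulr_sumr nn -/d; ring.
have : 0 <= \sum_i (a i - d * n i) ^+ 2 by apply: sumr_ge0 => i _; exact: sqr_ge0.
rewrite e subr_ge0 //.
Qed.

Lemma edot_normal (g : V) : g != 0 ->
  edot ((enorm g)^-1 *: g) ((enorm g)^-1 *: g) = 1.
Proof.
move=> g0; rewrite /edot /enorm.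
have mul_self_ge0 (y : R) : 0 <= y * y by rewrite -expr2 sqr_ge0.
have s0 : 0 < edot g g.
  rewrite lt_neqAle; apply/andP; split; last first.
    by apply: sumr_ge0 => i _; exact: mul_self_ge0.
  apply/eqP => /esym H; move/eqP: g0; apply; apply/rowP => i.
  have /(_ i isT) := psumr_eq0P (fun j _ => mul_self_ge0 (g ord0 j)) H.
  rewrite mxE => /eqP; rewrite mulf_eq0 orbb => /eqP.
  by rewrite (ord1 ord0).
have E (k : R) i : k * g ord0 i * (k * g ord0 i) = k ^+ 2 * (g ord0 i * g ord0 i) by ring.
under eq_bigr => i _ do rewrite !mxE E.
rewrite -mulr_sumr -/(edot g g) exprVn sqr_sqrtr ?ltW // mulVf //.
by rewrite gt_eqF.
Qed.

Lemma dnormal_sq (rho u : V -> R) x : grad rho x != 0 ->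
  dnormal rho u x ^+ 2 <= \sum_i pd i u x ^+ 2.
Proof.
move=> g0; have := edot_normal (grad rho x) g0; rewrite /dnormal /edot /outer_normal => nn.
have -> : \sum_i grad u x ord0 i * ((enorm (grad rho x))^-1 *: grad rho x) ord0 i
   = \sum_i pd i u x * ((enorm (grad rho x))^-1 *: grad rho x) ord0 i.
  by apply: eq_bigr => i _; rewrite [grad u x _ _]mxE.
exact: (unit_cs (fun i => pd i u x) _ nn).
Qed.


Lemma pd_shift (f : V -> R) (e : R) i :
  (forall y, differentiable f y) -> pd i (fun y => f y + e) = pd i f.
Proof.
move=> df; apply/funext => y; rewrite /pd.
have := deriveD (@diff_derivable _ _ _ _ _ (ebasis i) (df y)) (derivable_cst e y (ebasis i)).
by rewrite derive_cst addr0 => <-.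
Qed.

Lemma G_cont (phi : V -> R) :
  (forall j y, differentiable (pd j phi) y) ->
  continuous (fun y => \sum_i pd i phi y ^+ 2).
Proof.
move=> dp y; apply: differentiable_continuous.
rewrite -(fct_sumE _ _ (fun i y => pd i phi y ^+ 2)).
apply: differentiable_sum => i /=; exact: (differentiableM (dp i y) (dp i y)).
Qed.

Lemma key (t b ph e G P F d eta cc : R) : 0 < t -> t < 1 -> 0 <= G -> 0 < P ->
  0 < d -> 0 < ph -> 0 < e -> F = ph + e -> 0 < eta -> eta <= 1 ->
  4 * eta <= t * (1 - t) * cc -> e <= eta -> e <= (t * b - 1) * eta ->
  (eta <= ph \/ cc <= G) ->
  d * P <= - (d * t * ((t - 1) * (P / F ^+ 2) * G + (P / F) * (- (b * ph)))).
Proof.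
move=> t0 t1 G0 P0 d0 ph0 e0 -> eta0 eta1 h4 he1 he2 hor.
have F0 : 0 < ph + e by lra.
have tb1 : 0 < t * b - 1.
  have : 0 < (t * b - 1) * eta by lra.
  by rewrite pmulr_lgt0.
set A := t * (1 - t) * G / (ph + e) ^+ 2.
set B := t * b * ph / (ph + e).
have A0 : 0 <= A by rewrite /A divr_ge0 // ?mulr_ge0 // ?sqr_ge0 //; lra.
have B0 : 0 <= B.
  rewrite /B divr_ge0 //; last lra.
  have : 0 < t * b by lra.
  move=> tb; apply: mulr_ge0; lra.
have -> : - (d * t * ((t - 1) * (P / (ph + e) ^+ 2) * G +
     (P / (ph + e)) * (- (b * ph)))) = d * P * (A + B).
  rewrite /A /B; field; lra.
rewrite ler_pMr ?mulr_gt0 //.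
have [hph|hph] := lerP eta ph.
  suff : 1 <= B by lra.
  rewrite /B ler_pdivlMr // mul1r.
  have : (t * b - 1) * eta <= (t * b - 1) * ph by rewrite ler_pM2l.
  lra.
case: hor => [|hG]; first lra.
suff : 1 <= A by lra.
rewrite /A ler_pdivlMr ?exprn_gt0 // mul1r.
have h1 : (ph + e) ^+ 2 <= 4 * eta.
  have : ph + e <= 2 * eta by lra.
  move=> h; rewrite expr2; nra.
have : t * (1 - t) * cc <= t * (1 - t) * G.
  rewrite ler_pM2l //; apply: mulr_gt0; lra.
lra.
Qed.


Lemma D1pow (F : V -> R) (d t : R) (x : V) (i : 'I_N) :
  differentiable F x -> 0 < F x ->
  pd i (fun y => d * F y `^ t) x = d * (t * F x `^ (t - 1) * pd i F x).
Proof.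
move=> dF Fx0.
have [dp Dp] := Dpow F t x (ebasis i) dF Fx0.
rewrite /pd DMl; last exact: diff_derivable.
by rewrite Dp.
Qed.

Lemma lap_pow (phi : V -> R) (e d t : R) (x : V) :
  (forall y, differentiable phi y) -> (forall j y, differentiable (pd j phi) y) ->
  0 < phi x + e ->
  laplacian (fun y => d * (phi y + e) `^ t) x =
  d * t * ((t - 1) * (phi x + e) `^ (t - 2) * \sum_i pd i phi x ^+ 2
           + (phi x + e) `^ (t - 1) * laplacian phi x).
Proof.
move=> dphi dpd Fx0.
have dF y : differentiable (fun y => phi y + e) y.
  exact: (differentiableD (dphi y) (differentiable_cst e y)).
rewrite /laplacian.
have dpF i : differentiable (pd i (fun y => phi y + e)) x by rewrite pd_shift.
under eq_bigr => i _ do rewrite (D2pow _ d t x i dF (dpF i) Fx0) !pd_shift //.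
rewrite -mulr_sumr; congr (_ * _).
rewrite big_split /= -!mulr_sumr; congr (_ + _).
by rewrite mulr_sumr; apply: eq_bigr => i _; rewrite -mulrA expr2.
Qed.

Lemma bdry_ineq (rho phi : V -> R) (e d t q lam c2 : R) (x : V) :
  (forall y, differentiable phi y) -> phi x = 0 -> 0 < e -> 0 < d -> 0 < t ->
  0 < q -> q < 1 -> 0 < lam -> 0 < c2 -> - c2 <= dnormal rho phi x ->
  d `^ (1 - q) <= lam * (e `^ t) `^ q / (t * e `^ (t - 1) * c2) ->
  - lam * (d * (phi x + e) `^ t) `^ q <= dnormal rho (fun y => d * (phi y + e) `^ t) x.
Proof.
move=> dphi phx0 e0 d0 t0 q0 q1 l0 c0 hD hd.
have dF : differentiable (fun y => phi y + e) x.
  exact: (differentiableD (dphi x) (differentiable_cst e x)).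
have Fx0 : 0 < phi x + e by rewrite phx0 add0r.
set k := t * e `^ (t - 1).
have k0 : 0 < k by rewrite /k mulr_gt0 // powR_gt0.
have -> : dnormal rho (fun y => d * (phi y + e) `^ t) x = d * k * dnormal rho phi x.
  rewrite /dnormal /edot mulr_sumr; apply: eq_bigr => i _.
  rewrite !mxE D1pow // pd_shift // phx0 add0r /k; ring.
rewrite phx0 add0r powRM; last exact: powR_ge0; last exact: ltW.
set E := (e `^ t) `^ q.
have E0 : 0 < E by rewrite /E !powR_gt0.
have dd : d = d `^ q * d `^ (1 - q).
  have e1 : q + (1 - q) = 1 by ring.
  by rewrite -powRD ?e1 ?powRr1 ?implybT ?gt_eqF //; exact: ltW.
have hd' : d `^ (1 - q) * (k * c2) <= lam * E.
  by rewrite -ler_pdivlMr ?mulr_gt0 ?powR_gt0.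
have dq0 : 0 <= d `^ q by exact: powR_ge0.
have h2 : d * k * (- c2) <= d * k * dnormal rho phi x by rewrite ler_pM2l // mulr_gt0.
have h3 : d `^ q * (d `^ (1 - q) * (k * c2)) <= d `^ q * (lam * E) by exact: ler_wpM2l.
rewrite {1}dd in h2; apply: le_trans h2; rewrite -subr_ge0; rewrite -subr_ge0 in h3.
set A := d `^ q; set B := d `^ (1 - q).
have -> : A * B * k * - c2 - - lam * (A * E) = A * (lam * E) - A * (B * (k * c2)) by ring.
exact: h3.
Qed.

Lemma pow_m1 (F t : R) : 0 < F -> F `^ (t - 1) = F `^ t / F.
Proof.
move=> F0; rewrite powRB; last by rewrite (gt_eqF F0) implybT.
by rewrite powRr1 // ltW.
Qed.

Lemma pow_m2 (F t : R) : 0 < F -> F `^ (t - 2) = F `^ t / F ^+ 2.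
Proof.
move=> F0; rewrite powRB; last by rewrite (gt_eqF F0) implybT.
by rewrite (powR_mulrn 2) // ltW.
Qed.
End S.

Theorem theorem5p1 (R : realType) (N : nat) (Omega : set 'rV[R]_N)
  (rho : 'rV[R]_N -> R) (p q lam tau beta : R) (phi : 'rV[R]_N -> R) :
  smooth_bounded_domain Omega rho ->
  0 < q -> q < 1 -> 1 < p ->
  smallest_dirichlet_eigenvalue Omega beta ->
  dirichlet_eigenfunction Omega beta phi ->
  (forall x, Omega x -> 0 < phi x) ->
  (exists c1 c2 : R, [/\ 0 < c1, 0 < c2 &
     forall x, bdry Omega x -> c1 <= - dnormal rho phi x <= c2]) ->
  1 < beta ->
  0 < lam ->
  beta^-1 < tau -> tau < 1 ->
  exists2 eps0 : R, 0 < eps0 &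
    forall eps : R, 0 < eps -> eps <= eps0 ->
    exists2 delta1 : R, 0 < delta1 &
      forall delta : R, 0 < delta -> delta <= delta1 ->
        supersolution Omega rho p q lam
          (fun x => delta * (phi x + eps) `^ tau).
Proof.
move=> [[oO cO nO bO] [sr Oeq bdr]] q0 q1 p1 _ [[dphi [dpd _]] _ eig bd0]
  phipos [c1 [c2 [c10 c20 hc]]] b1 l0 tb t1.
have b0 : 0 < beta by lra.
have t0 : 0 < tau by apply: lt_trans tb; rewrite invr_gt0.
have tb1 : 1 < tau * beta.
  have : beta * beta^-1 < beta * tau by rewrite ltr_pM2l.
  by rewrite mulfV ?gt_eqF // mulrC.
pose G := fun y => \sum_i pd i phi y ^+ 2.
have Gb : forall x, bdry Omega x -> c1 ^+ 2 <= G x.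
  move=> x bx; have /andP [h1 _] := hc x bx.
  have := dnormal_sq rho phi x (proj2 (bdr x bx)).
  rewrite /G; move: h1; set D := dnormal rho phi x => h1 h2.
  apply: le_trans h2; rewrite !expr2.
  have : 0 <= (- D - c1) * (- D + c1) by apply: mulr_ge0; lra.
  move=> h3; nra.
have cphi : continuous phi by move=> y; exact: differentiable_continuous.
have [eta0 eta00 heta] := small_phi_grad Omega phi G (c1 ^+ 2) bO cphi (G_cont phi dpd)
  (exprn_gt0 2 c10) phipos Gb.
set cc := c1 ^+ 2 / 2.
have cc0 : 0 < cc by rewrite /cc divr_gt0 // exprn_gt0.
have tt0 : 0 < tau * (1 - tau) by apply: mulr_gt0; lra.
set eta := Num.min eta0 (Num.min 1 (tau * (1 - tau) * cc / 4)).
have eta_pos : 0 < eta.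
  rewrite /eta !lt_min eta00 ltr01 /= divr_gt0 //; exact: mulr_gt0.
have eta_le0 : eta <= eta0 by rewrite /eta ge_min lexx.
have eta_le1 : eta <= 1 by rewrite /eta !ge_min lexx orbT.
have eta_le4 : 4 * eta <= tau * (1 - tau) * cc.
  have : eta <= tau * (1 - tau) * cc / 4 by rewrite /eta !ge_min lexx !orbT.
  move=> h; rewrite mulrC -ler_pdivlMr //.
exists (Num.min eta ((tau * beta - 1) * eta)).
  rewrite lt_min eta_pos /=; apply: mulr_gt0 => //; lra.
move=> eps eps0; rewrite le_min => /andP [epse1 epse2].
set K0 := lam * (eps `^ tau) `^ q / (tau * eps `^ (tau - 1) * c2).
have K00 : 0 < K0.
  rewrite /K0 divr_gt0 ?mulr_gt0 ?powR_gt0 //.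
exists (K0 `^ (1 - q)^-1); first exact: powR_gt0.
move=> delta d0 dle; split.
- move=> x Ox.
  have phx := phipos x Ox.
  have Fx0 : 0 < phi x + eps by lra.
  rewrite lap_pow //.
  have lap : laplacian phi x = - (beta * phi x) by rewrite -(eig x Ox) opprK.
  set F := phi x + eps.
  set P := F `^ tau.
  have P0 : 0 < P by exact: powR_gt0.
  have pw2 : F `^ (tau - 2) = P / F ^+ 2 by exact: pow_m2.
  have pw1 : F `^ (tau - 1) = P / F by exact: pow_m1.
  rewrite pw2 pw1 lap.
  have hp : 0 <= (delta * P) `^ p by exact: powR_ge0.
  suff : delta * P <= - (delta * tau * ((tau - 1) * (P / F ^+ 2) * G x +
      P / F * - (beta * phi x))) by rewrite /G; lra.
  apply: (key tau beta (phi x) eps (G x) P F delta eta cc) => //.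
  + by apply: sumr_ge0 => i _; exact: sqr_ge0.
  + have [h|h] := lerP eta (phi x); [by left|right].
    apply: ltW; apply: heta => //; exact: lt_le_trans h eta_le0.
- move=> x bx.
  have phx0 : phi x = 0 by exact: bd0.
  apply: (bdry_ineq rho phi eps delta tau q lam c2 x dphi phx0 eps0 d0 t0 q0 q1 l0 c20).
    by have /andP [_ h] := hc x bx; lra.
  have q10 : 0 <= 1 - q by lra.
  have q1n : 1 - q != 0 by rewrite subr_eq0 gt_eqF.
  have hK : (K0 `^ (1 - q)^-1) `^ (1 - q) = K0.
    by rewrite -powRrM mulVf // powRr1 // ltW.
  have dn : delta \is Num.nneg by rewrite nnegrE ltW.
  have kn : K0 `^ (1 - q)^-1 \is Num.nneg by rewrite nnegrE powR_ge0.
  have := ge0_ler_powR q10 dn kn dle.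
  by rewrite hK.
Qed.
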